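(* Let $n\ge 1$, let $\mathbf{X}=\{x_0,\dots,x_{n-1}\}$, and let $\pi$ be a linear transformation over $\mathbf{X}$. Then every unitary matrix $U$ of size $2^n\times 2^n$ has a unique (up to isomorphism) reduced and normalized linearly transformed QMDD (LTQMDD) respecting $\pi$, i.e., a unique reduced and normalized LTQMDD $(v,e,\pi)$ whose semantics is $U$.
   Context: Indices of vectors and matrices are $0$-based; a natural number $0\le i<2^n$ is identified with its $n$-bit Boolean vector $(b_0\cdots b_{n-1})_2$, where $b_k$ is the value of $x_k$ under the standard order $[x_0,\dots,x_{n-1}]$ (so $x_0$ is the most significant bit). Linear transformations. For $\mathbf{Y}\subseteq\mathbf{X}$, its linear combination is $\bigoplus_{x\in\mathbf{Y}}x$ (XOR). A set $\Pi$ of linear combinations is fully ranked if every $x\in\mathbf{X}$ is the XOR of some subset of $\Pi$. A linear transformation is a sequence $\pi=[\pi_0,\dots,\pi_{n-1}]$ whose entries are the $n$ elements of a fully ranked set of linear combinations. It induces a bijection $\pi:\{0,1\}^n\to\{0,1\}^n$ by $\pi(v)_i=\pi_i(v)$ (the value of the linear combination $\pi_i$ under the assignment $v$), hence a permutation of $\{0,\dots,2^n-1\}$. For a $2^n\times2^n$ matrix $U=(u_{i,j})$, the linearly transformed matrix $U^{\pi}$ is defined by $u^{\pi}_{i,j}=u_{\pi(i),\pi(j)}$ for $0\le i,j<2^n$. QMDDs. A QMDD is a rooted directed acyclic graph given by a root edge $e$ pointing to a root node $v$. Nodes are internal or terminal. Each internal node $v$ has an index $\mathrm{ind}(v)\in\{0,\dots,n-1\}$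 and four outgoing edges $e_0(v),e_1(v),e_2(v),e_3(v)$ to successors $v_0,v_1,v_2,v_3$; every edge (including the root edge) carries a complex weight $w(e)$. There is a single terminal node, labeled $1$, with index $n$ and no successors. Along every path from the root to the terminal, indices strictly increase. Semantics: for an edge $e$ pointing to node $v$ considered from level $j\le \mathrm{ind}(v)$, with $J_m$ the $m\times m$ all-ones matrix and $s=\mathrm{ind}(v)-j$: if $v$ is terminal, $M^j_{(v,e)}=w(e)\,J_{2^s}$; if $v$ is internal, $M^j_{(v,e)}=w(e)\,J_{2^s}\otimes\begin{bmatrix}M^{k}_{(v_0,e_0)}&M^{k}_{(v_1,e_1)}\\ M^{k}_{(v_2,e_2)}&M^{k}_{(v_3,e_3)}\end{bmatrix}$ with $k=\mathrm{ind}(v)+1$ (the four blocks correspond to row/column value of the variable at level $\mathrm{ind}(v)$: block $0$ = row $0$, column $0$; block $1$ = row $0$, column $1$; block $2$ = row $1$, column $0$; block $3$ = row $1$, column $1$). The matrix represented by the QMDD is $M^0_{(v,e)}$, a $2^n\times 2^n$ matrix. Reduced: two internal nodes are isomorphic if they have the same index and their corresponding outgoing edges point to the same nodes with the same weights. A QMDD is reduced if (RI) no two distinct internal nodes are isomorphic, and (RS) no internal node has all four outgoing edges pointing to the same node with the same weight. Normalized: for every internal node, the largest magnitude among the nonzero weights of its outgoing edges is $1$, and among the edges attaining that maximum magnitude, the leftmost one has weight exactly $1$. LTQMDDs. A linearly transformed QMDD is a triple $(v,e,\pi)$ consisting of a QMDD $(v,e)$ and a linear transformation $\pi$; it is said to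 respect $\pi$, and it is reduced/normalized if the QMDD $(v,e)$ is. Its semantics is the linearly transformed matrix $(M^0_{(v,e)})^{\pi}$ of the matrix represented by $(v,e)$. *)

(* Defs.v *)
From HB Require Import structures.
From mathcomp Require Import all_boot all_order all_algebra fingraph.
From mathcomp Require Import reals complex.
Set Implicit Arguments. Unset Strict Implicit. Unset Printing Implicit Defensive.
Import Order.TTheory GRing.Theory Num.Theory.
Local Open Scope ring_scope.

Lemma exp2_gt0 (n : nat) : (0 < 2 ^ n)%N.
Proof. by rewrite expn_gt0. Qed.

(* b_k = value of x_k in index i; x_0 is the most significant bit *)
Definition bits_of (n : nat) (i : 'I_(2 ^ n)) : 'I_n -> bool :=
  fun k => odd (i %/ 2 ^ (n - k.+1))%N.

(* the index whose Boolean vector is b (the bound 2^n always holds) *)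
Definition idx_of_bits (n : nat) (b : 'I_n -> bool) : 'I_(2 ^ n) :=
  insubd (Ordinal (exp2_gt0 n)) (\sum_(k < n) b k * 2 ^ (n - k.+1))%N.

(* A linear combination over X = {x_0..x_{n-1}} is given by its support
   Y : {set 'I_n}; its value under v is the XOR of the v k, k in Y. *)
Definition lc_eval (n : nat) (Y : {set 'I_n}) (v : 'I_n -> bool) : bool :=
  odd #|[set k in Y | v k]|.

(* pi = [pi_0, ..., pi_{n-1}] : entries are n (distinct) linear combinations
   forming a fully ranked set: every x_j is the XOR of a subset of them. *)
Definition lin_trans (n : nat) (pi : 'I_n -> {set 'I_n}) : Prop :=
  injective pi /\
  forall j : 'I_n, exists S : {set 'I_n},
    forall k : 'I_n, (k == j) = odd #|[set i in S | k \in pi i]|.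

Definition lt_vec (n : nat) (pi : 'I_n -> {set 'I_n}) (v : 'I_n -> bool)
  : 'I_n -> bool := fun i => lc_eval (pi i) v.

Definition lt_perm (n : nat) (pi : 'I_n -> {set 'I_n}) (i : 'I_(2 ^ n))
  : 'I_(2 ^ n) := idx_of_bits (lt_vec pi (bits_of i)).

Definition lt_mx (C : Type) (n : nat) (pi : 'I_n -> {set 'I_n})
  (U : 'M[C]_(2 ^ n)) : 'M[C]_(2 ^ n) :=
  \matrix_(i, j) U (lt_perm pi i) (lt_perm pi j).

(* Internal nodes form a finite type; the unique terminal node (index n) is
   represented by [None]; an edge is (target : option node, weight). *)
Record qmdd (n : nat) (C : Type) := Qmdd {
  qnode : finType;
  qind : qnode -> 'I_n;
  qsucc : qnode -> 'I_4 -> option qnode;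
  qwt : qnode -> 'I_4 -> C;
  qroot : option qnode;
  qrootw : C }.

Arguments qnode {n C}.
Arguments qind {n C Q} : rename.
Arguments qsucc {n C Q} : rename.
Arguments qwt {n C Q} : rename.
Arguments qroot {n C}.
Arguments qrootw {n C}.

Definition qindex (n : nat) (C : Type) (Q : qmdd n C) (o : option (qnode Q))
  : nat := if o is Some v then val (qind v) else n.

Definition qedge (n : nat) (C : Type) (Q : qmdd n C) : rel (qnode Q) :=
  fun u w => [exists k : 'I_4, qsucc u k == Some w].

(* well-formed QMDD: a rooted DAG (every internal node is reachable from the
   root node), indices strictly increase along edges, and (standard QMDD
   convention) edges of weight 0 point to the terminal node. *)
Definition qmdd_wf (n : nat) (C : nzRingType) (Q : qmdd n C) : Prop :=
  [/\ (forall (v : qnode Q) (k : 'I_4),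
        (val (qind v) < qindex (qsucc v k))%N),
      (forall v : qnode Q, exists2 r, qroot Q = Some r & connect (@qedge n C Q) r v),
      (forall (v : qnode Q) (k : 'I_4), qwt v k = 0 -> qsucc v k = None)
    & qrootw Q = 0 -> qroot Q = None].

(* block selector: 0 = (row 0, col 0), 1 = (0,1), 2 = (1,0), 3 = (1,1) *)
Definition blk (r c : bool) : 'I_4 := inord (2 * r + c)%N.

(* entry (r, c) of the matrix M^j_{(w, e)} without the root weight w(e):
   product of the weights along the path selected by the row/column bits
   (levels skipped by an edge contribute the all-ones factor J).
   [f] is fuel; n.+1 suffices since indices strictly increase. *)
Fixpoint qval (n : nat) (C : nzRingType) (Q : qmdd n C) (f : nat)
  (o : option (qnode Q)) (r c : 'I_n -> bool) : C :=
  match o with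
  | None => 1
  | Some v =>
      if f is f'.+1 then
        let k := blk (r (qind v)) (c (qind v)) in
        qwt v k * qval f' (qsucc v k) r c
      else 0
  end.

Definition qsem (n : nat) (C : nzRingType) (Q : qmdd n C) : 'M[C]_(2 ^ n) :=
  \matrix_(i, j) (qrootw Q * qval n.+1 (qroot Q) (bits_of i) (bits_of j)).

Definition ltsem (n : nat) (C : nzRingType) (Q : qmdd n C)
  (pi : 'I_n -> {set 'I_n}) : 'M[C]_(2 ^ n) := lt_mx pi (qsem Q).

Definition qreduced (n : nat) (C : Type) (Q : qmdd n C) : Prop :=
  (forall u v : qnode Q, qind u = qind v ->
     (forall k, qsucc u k = qsucc v k /\ qwt u k = qwt v k) -> u = v) /\
  (forall v : qnode Q,
     ~ (forall k, qsucc v k = qsucc v 0 /\ qwt v k = qwt v 0)).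

Definition qnormalized (n : nat) (C : numDomainType) (Q : qmdd n C) : Prop :=
  forall v : qnode Q,
    [/\ (exists k, qwt v k != 0),
        (forall k, qwt v k != 0 -> `|qwt v k| <= 1),
        (exists2 k, qwt v k != 0 & `|qwt v k| = 1)
      &
        forall k, `|qwt v k| = 1 ->
          (forall k' : 'I_4, (k' < k)%N -> `|qwt v k'| != 1) -> qwt v k = 1].

Definition qiso (n : nat) (C : Type) (Q1 Q2 : qmdd n C) : Prop :=
  exists f : qnode Q1 -> qnode Q2,
    [/\ bijective f,
        (forall v, qind (f v) = qind v),
        (forall v k, qsucc (f v) k = omap f (qsucc v k)),
        (forall v k, qwt (f v) k = qwt v k)
      & qroot Q2 = omap f (qroot Q1) /\ qrootw Q2 = qrootw Q1].

Definition unitary_mx (C : numClosedFieldType) (m : nat) (U : 'M[C]_m) : Prop :=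
  U *m (map_mx Num.conj U)^T = 1%:M /\ (map_mx Num.conj U)^T *m U = 1%:M.

(* Main.v *)
Require Import Defs.
From HB Require Import structures.
From mathcomp Require Import all_boot all_order all_algebra fingraph.
From mathcomp Require Import reals complex.
From mathcomp Require Import zify.
Import Order.TTheory GRing.Theory Num.Theory.
Local Open Scope ring_scope.
Set Implicit Arguments. Unset Strict Implicit. Unset Printing Implicit Defensive.
Section Gen.
Variables (n : nat) (C : numFieldType).
Local Notation V := {ffun 'I_n -> bool}.

Definition setb (i : 'I_n) (b : bool) (r : V) : V :=
  [ffun k => if k == i then b else r k].
Definition mix (j : nat) (r0 r : V) : V :=
  [ffun k : 'I_n => if (k < j)%N then r0 k else r k].

Lemma blkK (k : 'I_4) : blk (2 <= k)%N (odd k) = k.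
Proof.
apply: val_inj; rewrite /blk /= inordK; case: k => [[|[|[|[|m]]]] Hm] //=.
Qed.

Lemma blk_val rb cb : val (blk rb cb) = (2 * rb + cb)%N.
Proof. by rewrite /blk /= inordK //; case: rb; case: cb. Qed.

Lemma blk_r rb cb : (2 <= blk rb cb)%N = rb.
Proof. by rewrite blk_val; case: rb; case: cb. Qed.

Lemma blk_c rb cb : odd (blk rb cb) = cb.
Proof. by rewrite blk_val; case: rb; case: cb. Qed.

Definition qv (Q : qmdd n C) (o : option (qnode Q)) (r c : 'I_n -> bool) : C :=
  qval n.+1 o r c.

Definition wf1 (Q : qmdd n C) :=
  forall (v : qnode Q) (k : 'I_4), (val (qind v) < qindex (qsucc v k))%N.
Definition wf3 (Q : qmdd n C) :=
  forall (v : qnode Q) (k : 'I_4), qwt v k = 0 -> qsucc v k = None.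

Lemma qindex_le (Q : qmdd n C) (o : option (qnode Q)) : (qindex o <= n)%N.
Proof. by case: o => [v|] //=; apply: ltnW. Qed.

Lemma nat_help m i q f : (m - i < f.+1)%N -> (i < m)%N -> (q <= m)%N -> (i < q)%N -> (m - q < f)%N.
Proof. lia. Qed.

Section Q.
Variable Q : qmdd n C.
Hypothesis h1 : wf1 Q.

Lemma qval_ext f (o : option (qnode Q)) r r' c c' :
  (forall k : 'I_n, (qindex o <= k)%N -> r k = r' k /\ c k = c' k) ->
  qval f o r c = qval f o r' c'.
Proof.
elim: f o => [|f IH] [v|] //= H.
have [-> ->] := H (qind v) (leqnn _).
congr (_ * _); apply: IH => k hk; apply: H.
by apply: ltnW; apply: leq_trans hk; apply: h1.
Qed.

Lemma qval_fuel f g (o : option (qnode Q)) r c :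
  (n - qindex o < f)%N -> (n - qindex o < g)%N -> qval f o r c = qval g o r c.
Proof.
elim: f g o => [|f IH] [|g] [v|] //= hf hg.
congr (_ * _); apply: IH.
  exact: (nat_help hf (ltn_ord _) (qindex_le _) (h1 v _)).
exact: (nat_help hg (ltn_ord _) (qindex_le _) (h1 v _)).
Qed.

Lemma qv_Some (v : qnode Q) r c :
  qv (Some v) r c = qwt v (blk (r (qind v)) (c (qind v))) *
                    qv (qsucc v (blk (r (qind v)) (c (qind v)))) r c.
Proof.
rewrite /qv; rewrite {1}/qval -/qval; congr (_ * _); apply: qval_fuel.
  have := h1 v (blk (r (qind v)) (c (qind v))).
  have := qindex_le (qsucc v (blk (r (qind v)) (c (qind v)))).
  have := ltn_ord (qind v). move=> a b d; exact: (nat_help (f:=n) (leq_ltn_trans (leq_subr _ _) (ltnSn n)) a b d).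
by rewrite ltnS leq_subr.
Qed.

Lemma qv_ext (o : option (qnode Q)) r r' c c' :
  (forall k : 'I_n, (qindex o <= k)%N -> r k = r' k /\ c k = c' k) ->
  qv o r c = qv o r' c'.
Proof. exact: qval_ext. Qed.

Lemma qv_set (v : qnode Q) rb cb (r c : V) :
  qv (Some v) (setb (qind v) rb r) (setb (qind v) cb c) =
  qwt v (blk rb cb) * qv (qsucc v (blk rb cb)) r c.
Proof.
rewrite qv_Some !ffunE eqxx; congr (_ * _); apply: qv_ext => k hk.
have hne : k != qind v.
  apply/eqP => ek; move: (leq_trans (h1 v (blk rb cb)) hk); by rewrite ek ltnn.
by rewrite !ffunE (negbTE hne).
Qed.

Lemma path_ind (u : qnode Q) p :
  path (@qedge _ _ Q) u p -> (val (qind u) <= val (qind (last u p)))%N.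
Proof.
elim: p u => [|u' p IH] u //= /andP [e pth].
apply: leq_trans (IH _ pth); case/existsP: e => k /eqP hk.
by have := h1 u k; rewrite hk /=; apply: ltnW.
Qed.

Hypothesis h3 : wf3 Q.
Hypothesis hnz : forall v : qnode Q, exists k, qwt v k != 0.

Lemma qv_nz (o : option (qnode Q)) : exists r c : V, qv o r c != 0.
Proof.
suff: forall d (o : option (qnode Q)), (n - qindex o < d)%N ->
   exists r c : V, qv o r c != 0 by apply; apply: ltnSn.
elim=> [|d IH] [v|] //= hd.
- have [k hk] := hnz v.
  have [|r [c hrc]] := IH (qsucc v k).
    exact: (nat_help hd (ltn_ord _) (qindex_le _) (h1 v k)).
  exists (setb (qind v) (2 <= k)%N r), (setb (qind v) (odd k) c).
  by rewrite qv_set blkK mulf_neq0.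
- by exists [ffun => false], [ffun => false]; rewrite /qv /= oner_neq0.
Qed.

Lemma reach (u v : qnode Q) : connect (@qedge _ _ Q) u v ->
  exists (r0 c0 : V) (w : C), w != 0 /\ forall r c : V,
    qv (Some u) (mix (qind v) r0 r) (mix (qind v) c0 c) = w * qv (Some v) r c.
Proof.
case/connectP => p; elim: p u => [|u' p IH] u /=.
  move=> _ ->; exists [ffun => false], [ffun => false], 1; split => [|r c].
    exact: oner_neq0.
  rewrite mul1r; apply: qv_ext => k /= hk.
  by rewrite !ffunE ltnNge hk.
case/andP => e pth hv.
have [r0 [c0 [w [hw H]]]] := IH u' pth hv.
case/existsP: e => k /eqP hk.
have hlt : (val (qind u) < val (qind v))%N.
  have b := path_ind pth; rewrite -hv in b.
  have a := h1 u k; rewrite hk in a; exact: leq_trans a b.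
exists (setb (qind u) (2 <= k)%N r0), (setb (qind u) (odd k) c0),
  (qwt u k * w); split.
  rewrite mulf_neq0 //; apply/eqP => h0; have := h3 h0; by rewrite hk.
move=> r c.
have E : forall (x0 x : V) b, mix (qind v) (setb (qind u) b x0) x =
          setb (qind u) b (mix (qind v) x0 x).
  move=> x0 x b; apply/ffunP => k'; rewrite !ffunE.
  case: eqP => [->|]; first by rewrite hlt.
  done.
by rewrite !E qv_set blkK hk -mulrA -H.
Qed.

Lemma restr (o : option (qnode Q)) (j : nat) (r0 c0 : V) : (j <= n)%N ->
  exists (o' : option (qnode Q)) (w : C), [/\ (j <= qindex o')%N,
    (o' = None \/ exists u u', [/\ o = Some u, o' = Some u' &
        connect (@qedge _ _ Q) u u'])
  & forall r c : V, qv o (mix j r0 r) (mix j c0 c) = w * qv o' r c].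
Proof.
move=> hj.
suff: forall d (o : option (qnode Q)), (n - qindex o < d)%N ->
  exists (o' : option (qnode Q)) (w : C), [/\ (j <= qindex o')%N,
    (o' = None \/ exists u u', [/\ o = Some u, o' = Some u' &
        connect (@qedge _ _ Q) u u'])
  & forall r c : V, qv o (mix j r0 r) (mix j c0 c) = w * qv o' r c].
  by apply; apply: ltnSn.
elim=> [|d IH] {}o //= hd.
case: (leqP j (qindex o)) => hjo.
  exists o, 1; split => //.
    by case: o {hd hjo} => [u|]; [right; exists u, u; split|left].
  move=> r c; rewrite mul1r; apply: qv_ext => k hk.
  by rewrite !ffunE ltnNge (leq_trans hjo hk).
case: o hd hjo => [v|] /= hd hjo; last by move: hjo; rewrite ltnNge hj.
set k := blk (r0 (qind v)) (c0 (qind v)).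
have [|o' [w [hj' hr H]]] := IH (qsucc v k).
  exact: (nat_help hd (ltn_ord _) (qindex_le _) (h1 v k)).
exists o', (qwt v k * w); split => //.
  case: hr => [->|[u [u' [hu -> hc]]]]; [by left|right].
  exists v, u'; split => //; apply: connect_trans hc; apply: connect1.
  by apply/existsP; exists k; rewrite hu.
move=> r c; rewrite qv_Some !ffunE hjo H mulrA.
done.
Qed.

End Q.
End Gen.
Section AB.
Variables (n : nat) (C : numFieldType).
Local Notation V := {ffun 'I_n -> bool}.

Definition good (Q : qmdd n C) := [/\ wf1 Q, wf3 Q, qreduced Q & qnormalized Q].

Lemma good_nz (Q : qmdd n C) : good Q -> forall v : qnode Q, exists k, qwt v k != 0.
Proof. by case=> _ _ _ hN v; have [[k hk] _ _ _] := hN v; exists k. Qed.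

Lemma good_qv_nz (Q : qmdd n C) (g : good Q) (o : option (qnode Q)) :
  exists r c : V, qv o r c != 0.
Proof. case: (g) => h1 h3 _ _; apply: qv_nz => //; exact: good_nz. Qed.

Definition normw (w : 'I_4 -> C) :=
  [/\ (exists k, w k != 0),
      (forall k, w k != 0 -> `|w k| <= 1),
      (exists2 k, w k != 0 & `|w k| = 1)
    & forall k, `|w k| = 1 ->
          (forall k' : 'I_4, (k' < k)%N -> `|w k'| != 1) -> w k = 1].

Lemma leftmost w : normw w ->
  exists k, w k = 1 /\ forall k', `|w k'| = 1 -> (k <= k')%N.
Proof.
case=> _ _ [k0 _ hk0] h4.
have exP : exists m, (m < 4)%N && (`|w (inord m)| == 1).
  by exists k0; rewrite ltn_ord inord_val hk0 eqxx.
case: (ex_minnP exP) => m /andP [hm4 /eqP hm] hmin.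
have hkm : nat_of_ord (inord m : 'I_4) = m by rewrite inordK.
exists (inord m); split.
  apply: h4 => // k' hk'; apply/negP => /eqP e.
  have := hmin k'; rewrite ltn_ord inord_val e eqxx => /(_ isT).
  by rewrite -hkm leqNgt hk'.
move=> k' e; rewrite hkm; apply: hmin.
by rewrite ltn_ord inord_val e eqxx.
Qed.

Lemma norm_prop (w1 w2 : 'I_4 -> C) a b : a != 0 -> b != 0 ->
  (forall k, a * w1 k = b * w2 k) -> normw w1 -> normw w2 -> a = b.
Proof.
move=> ha hb E n1 n2.
have [k1 [e1 m1]] := leftmost n1.
have [k2 [e2 m2]] := leftmost n2.
have [_ b1 _ _] := n1; have [_ b2 _ _] := n2.
have E1 := E k1; rewrite e1 mulr1 in E1.
have E2 := E k2; rewrite e2 mulr1 in E2.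
have nz2 : w2 k1 != 0 by apply: contraNneq ha => h; rewrite E1 h mulr0.
have nz1 : w1 k2 != 0 by apply: contraNneq hb => h; rewrite -E2 h mulr0.
have la : `|a| <= `|b|.
  rewrite E1 normrM -{2}(mulr1 `|b|); apply: ler_wpM2l => //; exact: b2.
have lb : `|b| <= `|a|.
  rewrite -E2 normrM -{2}(mulr1 `|a|); apply: ler_wpM2l => //; exact: b1.
have eab : `|a| = `|b| by apply/eqP; rewrite eq_le la lb.
have nb : `|b| != 0 by rewrite normr_eq0.
have h21 : `|w2 k1| = 1.
  apply: (mulfI nb); rewrite mulr1 -normrM -E1 eab //.
have h12 : `|w1 k2| = 1.
  apply: (mulfI nb); rewrite mulr1 -eab -normrM E2 //.
have ek : k1 = k2.
  by apply: val_inj; apply/eqP; rewrite eqn_leq (m1 _ h12) (m2 _ h21).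
by rewrite E1 ek e2 mulr1.
Qed.

Lemma normw_node (Q : qmdd n C) (hN : qnormalized Q) (v : qnode Q) :
  normw (qwt v).
Proof. by have [? ? ? ?] := hN v; split. Qed.

Definition PA d := forall Q1 Q2 : qmdd n C, good Q1 -> good Q2 ->
  forall (o1 : option (qnode Q1)) (o2 : option (qnode Q2)),
  (n - qindex o1 <= d)%N -> (n - qindex o2 <= d)%N ->
  forall a b, a != 0 -> (forall r c : V, a * qv o1 r c = b * qv o2 r c) ->
  a = b /\ qindex o1 = qindex o2.

Definition PB d := forall Q : qmdd n C, good Q ->
  forall (o1 o2 : option (qnode Q)),
  (n - qindex o1 <= d)%N -> (n - qindex o2 <= d)%N ->
  (forall r c : V, qv o1 r c = qv o2 r c) -> o1 = o2.

Lemma none_bound (Q : qmdd n C) (o : option (qnode Q)) :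
  (n - qindex o <= 0)%N -> o = None.
Proof. by case: o => //= v; rewrite leqn0 subn_eq0 leqNgt ltn_ord. Qed.

Lemma child_bound (Q : qmdd n C) (h1 : wf1 Q) (v : qnode Q) k d :
  (n - val (qind v) <= d.+1)%N -> (n - qindex (qsucc v k) <= d)%N.
Proof.
move=> hd; have := h1 v k; have := qindex_le (qsucc v k); have := ltn_ord (qind v).
move=> a b c'; exact: (nat_help hd a b c').
Qed.

Lemma other_bound (Q : qmdd n C) (Q' : qmdd n C) (v : qnode Q) (o : option (qnode Q')) d :
  (n - val (qind v) <= d.+1)%N -> (val (qind v) < qindex o)%N -> (n - qindex o <= d)%N.
Proof.
move=> hd; have := qindex_le o; have := ltn_ord (qind v).
move=> a b c'; exact: (nat_help hd a b c').
Qed.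

Lemma A_lt d : PA d -> PB d ->
  forall Q1 Q2 : qmdd n C, good Q1 -> good Q2 ->
  forall (v1 : qnode Q1) (o2 : option (qnode Q2)),
  (n - val (qind v1) <= d.+1)%N -> (val (qind v1) < qindex o2)%N ->
  forall a b, a != 0 -> b != 0 ->
  (forall r c : V, a * qv (Some v1) r c = b * qv o2 r c) -> False.
Proof.
move=> IHA IHB Q1 Q2 g1 g2 v1 o2 hd hlt a b ha hb H.
have [h11 h13 [hRI hRS] hN1] := g1.
have [h21 _ _ _] := g2.
set i := qind v1.
have E : forall k (r c : V), (a * qwt v1 k) * qv (qsucc v1 k) r c = b * qv o2 r c.
  move=> k r c; have := H (setb i (2 <= k)%N r) (setb i (odd k) c).
  rewrite (qv_set h11) blkK mulrA => ->; congr (_ * _); apply: (qv_ext h21) => k' hk'.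
  have hne : k' != i.
    by apply/eqP => ek; move: (leq_trans hlt hk'); rewrite ek ltnn.
  by rewrite !ffunE (negbTE hne).
have nzk : forall k, a * qwt v1 k != 0.
  move=> k; have [r [c hrc]] := good_qv_nz g2 o2.
  apply/eqP => h0; have := E k r c; rewrite h0 mul0r => /esym/eqP.
  by rewrite mulf_eq0 (negbTE hb) (negbTE hrc).
have AK : forall k, a * qwt v1 k = b.
  move=> k; have [] := IHA Q1 Q2 g1 g2 (qsucc v1 k) o2 (child_bound h11 k hd)
     (other_bound hd hlt) _ b (nzk k) (E k) => //.
apply: (hRS v1) => k; split; last first.
  by apply: (mulfI ha); rewrite !AK.
apply: (IHB Q1 g1) => [|| r c]; try exact: (child_bound h11 _ hd).
apply: (mulfI hb); rewrite -{1}(AK k) -(AK 0) !E //.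
Qed.

Lemma A_eq d : PA d -> PB d ->
  forall Q1 Q2 : qmdd n C, good Q1 -> good Q2 ->
  forall (v1 : qnode Q1) (v2 : qnode Q2),
  (n - val (qind v1) <= d.+1)%N -> val (qind v1) = val (qind v2) ->
  forall a b, a != 0 -> b != 0 ->
  (forall r c : V, a * qv (Some v1) r c = b * qv (Some v2) r c) -> a = b.
Proof.
move=> IHA IHB Q1 Q2 g1 g2 v1 v2 hd hi a b ha hb H.
have [h11 h13 _ hN1] := g1; have [h21 h23 _ hN2] := g2.
have hi' : qind v1 = qind v2 by apply: val_inj.
have hd2 : (n - val (qind v2) <= d.+1)%N by rewrite -hi.
have E : forall k (r c : V), (a * qwt v1 k) * qv (qsucc v1 k) r c =
                             (b * qwt v2 k) * qv (qsucc v2 k) r c.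
  move=> k r c; have e := H (setb (qind v1) (2 <= k)%N r) (setb (qind v1) (odd k) c).
  by rewrite {3 4}hi' (qv_set h11) (qv_set h21) blkK !mulrA in e.
apply: (norm_prop ha hb _ (normw_node hN1 v1) (normw_node hN2 v2)) => k.
have [h0|hnz] := eqVneq (a * qwt v1 k) 0.
  rewrite h0; have [r [c hrc]] := good_qv_nz g2 (qsucc v2 k).
  have := E k r c; rewrite h0 mul0r => /esym/eqP.
  by rewrite mulf_eq0 (negbTE hrc) orbF => /eqP ->.
by have [] := IHA Q1 Q2 g1 g2 _ _ (child_bound h11 k hd) (child_bound h21 k hd2)
   _ _ hnz (E k).
Qed.

Lemma A_step d : PA d -> PB d -> PA d.+1.
Proof.
move=> IHA IHB Q1 Q2 g1 g2 o1 o2 hd1 hd2 a b ha H.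
have hb : b != 0.
  have [r [c hrc]] := good_qv_nz g1 o1.
  apply/eqP => hb0; have := H r c; rewrite hb0 mul0r => /eqP.
  by rewrite mulf_eq0 (negbTE ha) (negbTE hrc).
have H' : forall r c : V, b * qv o2 r c = a * qv o1 r c by move=> r c; rewrite H.
case: o1 o2 hd1 hd2 H H' => [v1|] [v2|] /= hd1 hd2 H H'.
- case: (ltngtP (val (qind v1)) (val (qind v2))) => hlt.
  + by case: (A_lt IHA IHB g1 g2 hd1 (hlt : (_ < qindex (Some v2))%N) ha hb H).
  + by case: (A_lt IHA IHB g2 g1 hd2 (hlt : (_ < qindex (Some v1))%N) hb ha H').
  + by split => //; apply: (A_eq IHA IHB g1 g2 hd1 hlt ha hb H).
- by case: (A_lt IHA IHB g1 g2 hd1 (ltn_ord _ : (_ < qindex None)%N) ha hb H).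
- by case: (A_lt IHA IHB g2 g1 hd2 (ltn_ord _ : (_ < qindex None)%N) hb ha H').
- split => //; have := H [ffun => false] [ffun => false].
  by rewrite /qv /= !mulr1.
Qed.

Lemma B_step d : PA d -> PA d.+1 -> PB d -> PB d.+1.
Proof.
move=> IHA IHA' IHB Q g o1 o2 hd1 hd2 H.
have H1 : forall r c : V, 1 * qv o1 r c = 1 * qv o2 r c by move=> r c; rewrite !mul1r H.
have [_ hi] := IHA' Q Q g g o1 o2 hd1 hd2 1 1 (oner_neq0 _) H1; clear H1.
have [h1 h3 [hRI hRS] hN] := g.
case: o1 o2 hd1 hd2 H hi => [v1|] [v2|] //= hd1 hd2 H hi; last first.
- by move: (ltn_ord (qind v2)); rewrite -hi ltnn.
- by move: (ltn_ord (qind v1)); rewrite hi ltnn.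
have hi' : qind v1 = qind v2 by apply: val_inj.
have hd2' : (n - val (qind v2) <= d.+1)%N by move: hd1; rewrite hi.
congr Some; apply: hRI => // k.
have E : forall (r c : V), qwt v1 k * qv (qsucc v1 k) r c =
                           qwt v2 k * qv (qsucc v2 k) r c.
  move=> r c; have e := H (setb (qind v1) (2 <= k)%N r) (setb (qind v1) (odd k) c).
  by rewrite {3 4}hi' !(qv_set h1) blkK in e.
have [h0|hnz] := eqVneq (qwt v1 k) 0.
  have h0' : qwt v2 k = 0.
    have [r [c hrc]] := good_qv_nz g (qsucc v2 k).
    have := E r c; rewrite h0 mul0r => /esym/eqP.
    by rewrite mulf_eq0 (negbTE hrc) orbF => /eqP.
  by rewrite (h3 _ _ h0) (h3 _ _ h0') h0 h0'.
have [ew _] := IHA Q Q g g _ _ (child_bound h1 k hd1) (child_bound h1 k hd2') _ _ hnz E.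
split => //; apply: (IHB Q g); try exact: (child_bound h1 k _).
by move=> r c; apply: (mulfI hnz); rewrite E ew.
Qed.

Lemma AB d : PA d /\ PB d.
Proof.
elim: d => [|d [IHA IHB]].
  split.
    move=> Q1 Q2 g1 g2 o1 o2 h1 h2 a b ha H.
    rewrite (none_bound h1) (none_bound h2) in H *; split => //.
    by have := H [ffun => false] [ffun => false]; rewrite /qv /= !mulr1.
  by move=> Q g o1 o2 h1 h2 _; rewrite (none_bound h1) (none_bound h2).
have A' := A_step IHA IHB; split => //; exact: B_step.
Qed.

Lemma qv_inj (Q : qmdd n C) (g : good Q) (o1 o2 : option (qnode Q)) :
  (forall r c : V, qv o1 r c = qv o2 r c) -> o1 = o2.
Proof. by apply: (proj2 (AB n) Q g); apply: leq_subr. Qed.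

Lemma qv_scal (Q1 Q2 : qmdd n C) (g1 : good Q1) (g2 : good Q2)
  (o1 : option (qnode Q1)) (o2 : option (qnode Q2)) a b : a != 0 ->
  (forall r c : V, a * qv o1 r c = b * qv o2 r c) ->
  a = b /\ qindex o1 = qindex o2.
Proof. by apply: (proj1 (AB n) Q1 Q2 g1 g2); apply: leq_subr. Qed.

End AB.
Section Iso.
Variables (n : nat) (C : numFieldType).
Local Notation V := {ffun 'I_n -> bool}.

Lemma wf_good (Q : qmdd n C) : qmdd_wf Q -> qreduced Q -> qnormalized Q -> good Q.
Proof. by case=> h1 _ h3 _ hR hN; split. Qed.

Lemma rootw_nz (Q : qmdd n C) : qmdd_wf Q -> forall r, qroot Q = Some r -> qrootw Q != 0.
Proof. by case=> _ _ _ h4 r hr; apply/eqP => /h4; rewrite hr. Qed.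

Lemma match_node (Q1 Q2 : qmdd n C) (w1 : qmdd_wf Q1) (g1 : good Q1)
  (w2 : qmdd_wf Q2) (g2 : good Q2)
  (HM : forall r c : V, qrootw Q1 * qv (qroot Q1) r c = qrootw Q2 * qv (qroot Q2) r c)
  (v : qnode Q1) :
  exists v2 : qnode Q2, forall r c : V, qv (Some v2) r c = qv (Some v) r c.
Proof.
have [h11 h13 _ _] := g1; have [h21 h23 _ _] := g2.
have [_ hreach _ _] := w1.
have [rt hrt hc] := hreach v.
have hrw := rootw_nz w1 hrt.
have [r0 [c0 [w [hw H]]]] := reach h11 h13 hc.
have [o' [w' [hj _ H2]]] := restr h21 (qroot Q2) r0 c0 (ltnW (ltn_ord (qind v))).
have E : forall r c : V, (qrootw Q1 * w) * qv (Some v) r c = (qrootw Q2 * w') * qv o' r c.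
  move=> r c; rewrite -!mulrA -H -H2 -HM hrt //.
have [eab hi] := qv_scal g1 g2 (mulf_neq0 hrw hw) E.
case: o' hi {hj H2} E => [v2|] /= hi E; last first.
  by move: (ltn_ord (qind v)); rewrite hi ltnn.
exists v2 => r c; apply: (mulfI (mulf_neq0 hrw hw)); rewrite E eab //.
Qed.

Lemma EC (Q1 Q2 : qmdd n C) (g1 : good Q1) (g2 : good Q2)
  (f : qnode Q1 -> qnode Q2)
  (hf : forall v (r c : V), qv (Some (f v)) r c = qv (Some v) r c)
  (w1 : C) (o1 : option (qnode Q1)) (w2 : C) (o2 : option (qnode Q2)) :
  (w1 = 0 -> o1 = None) -> (w2 = 0 -> o2 = None) ->
  (forall r c : V, w1 * qv o1 r c = w2 * qv o2 r c) -> w1 = w2 /\ o2 = omap f o1.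
Proof.
move=> z1 z2 E.
have [h0|hnz] := eqVneq w1 0.
  have h0' : w2 = 0.
    have [r [c hrc]] := good_qv_nz g2 o2.
    have := E r c; rewrite h0 mul0r => /esym/eqP.
    by rewrite mulf_eq0 (negbTE hrc) orbF => /eqP.
  by rewrite (z1 h0) (z2 h0') h0 h0'.
have [ew hi] := qv_scal g1 g2 hnz E.
split => //.
have E' : forall r c : V, qv o1 r c = qv o2 r c.
  by move=> r c; apply: (mulfI hnz); rewrite E ew.
case: o1 o2 hi E' {E z1 z2} => [v1|] [v2|] //= hi E'.
- apply: (qv_inj g2) => r c; rewrite hf E' //.
- by move: (ltn_ord (qind v1)); rewrite hi ltnn.
- by move: (ltn_ord (qind v2)); rewrite -hi ltnn.
Qed.

Lemma iso_of (Q1 Q2 : qmdd n C) :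
  qmdd_wf Q1 -> qreduced Q1 -> qnormalized Q1 ->
  qmdd_wf Q2 -> qreduced Q2 -> qnormalized Q2 ->
  (forall r c : V, qrootw Q1 * qv (qroot Q1) r c = qrootw Q2 * qv (qroot Q2) r c) ->
  qiso Q1 Q2.
Proof.
move=> w1 r1 n1 w2 r2 n2 HM.
have g1 := wf_good w1 r1 n1; have g2 := wf_good w2 r2 n2.
have HM' : forall r c : V, qrootw Q2 * qv (qroot Q2) r c = qrootw Q1 * qv (qroot Q1) r c.
  by move=> r c; rewrite HM.
have [f hf] := fin_all_exists (match_node w1 g1 w2 g2 HM).
have [g hg] := fin_all_exists (match_node w2 g2 w1 g1 HM').
have [h11 h13 _ _] := g1; have [h21 h23 _ _] := g2.
have hfi : forall v, qind (f v) = qind v.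
  move=> v; have E : forall r c : V, 1 * qv (Some (f v)) r c = 1 * qv (Some v) r c.
    by move=> r c; rewrite !mul1r hf.
  by have [_ /= hi] := qv_scal g2 g1 (oner_neq0 _) E; apply: val_inj.
exists f; split => //.
- exists g.
    move=> v; apply: (congr1 (fun o => if o is Some x then x else v)
       (qv_inj g1 (o1 := Some (g (f v))) (o2 := Some v) _)).
    by move=> r c; rewrite hg hf.
  move=> v; apply: (congr1 (fun o => if o is Some x then x else v)
       (qv_inj g2 (o1 := Some (f (g v))) (o2 := Some v) _)).
  by move=> r c; rewrite hf hg.
- move=> v k.
  have E : forall r c : V, qwt v k * qv (qsucc v k) r c =
                           qwt (f v) k * qv (qsucc (f v) k) r c.
    move=> r c; have e := hf v (setb (qind v) (2 <= k)%N r) (setb (qind v) (odd k) c).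
    rewrite -{1 2}(hfi v) (qv_set h21) (qv_set h11) blkK in e.
    by rewrite e.
  have [_ ->] := EC g1 g2 hf (h13 v k) (h23 (f v) k) E => //.
- move=> v k.
  have E : forall r c : V, qwt v k * qv (qsucc v k) r c =
                           qwt (f v) k * qv (qsucc (f v) k) r c.
    move=> r c; have e := hf v (setb (qind v) (2 <= k)%N r) (setb (qind v) (odd k) c).
    rewrite -{1 2}(hfi v) (qv_set h21) (qv_set h11) blkK in e.
    by rewrite e.
  by have [-> _] := EC g1 g2 hf (h13 v k) (h23 (f v) k) E.
- have z1 : qrootw Q1 = 0 -> qroot Q1 = None.
    by case: w1.
  have z2 : qrootw Q2 = 0 -> qroot Q2 = None.
    by case: w2.
  by have [-> ->] := EC g1 g2 hf z1 z2 HM.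
Qed.

End Iso.
Lemma insub_some (T : Type) (P : pred T) (sT : subType P) (x : T) (u : sT) :
  insub x = Some u -> val u = x.
Proof. by case: insubP => // u' _ <- [->]. Qed.

Section Scal.
Variables (n : nat) (C : numFieldType) (i0 : 'I_n).
Local Notation V := {ffun 'I_n -> bool}.
Local Notation P := (V * V)%type.
Local Notation Fn := {ffun P -> C}.

Definition rsk (i : 'I_n) (k : 'I_4) (F : Fn) : Fn :=
  [ffun p : P => F (setb i (2 <= k)%N p.1, setb i (odd k) p.2)].

Definition agree (m : nat) (p q : P) : bool :=
  [forall k : 'I_n, (m <= k)%N ==> (p.1 k == q.1 k) && (p.2 k == q.2 k)].

Definition indep (m : nat) (F : Fn) : bool :=
  [forall p, forall q, agree m p q ==> (F p == F q)].

Lemma indepE m (F : Fn) : indep m F -> forall p q : P,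
  (forall k : 'I_n, (m <= k)%N -> p.1 k = q.1 k /\ p.2 k = q.2 k) -> F p = F q.
Proof.
move=> /forallP H p q hpq; apply/eqP; move: (H p) => /forallP /(_ q) /implyP; apply.
by apply/forallP => k; apply/implyP => /hpq [-> ->]; rewrite !eqxx.
Qed.

Lemma indepI m (F : Fn) : (forall p q : P,
  (forall k : 'I_n, (m <= k)%N -> p.1 k = q.1 k /\ p.2 k = q.2 k) -> F p = F q) ->
  indep m F.
Proof.
move=> H; apply/forallP => p; apply/forallP => q; apply/implyP => /forallP hpq.
apply/eqP; apply: H => k hk; have /implyP/(_ hk)/andP [/eqP -> /eqP ->] := hpq k.
by [].
Qed.

Lemma indep0 (F : Fn) : indep 0 F.
Proof.
apply: indepI => p q H; suff -> : p = q by [].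
case: p q H => [r c] [r' c'] H.
by congr pair; apply/ffunP => k; have [] := H k isT.
Qed.

Lemma indep_mono m m' (F : Fn) : (m' <= m)%N -> indep m F -> indep m' F.
Proof.
move=> hm hF; apply: indepI => p q H; apply: (indepE hF) => k hk.
exact: H (leq_trans hm hk).
Qed.

Definition dep (F : Fn) : nat := \max_(m < n.+1 | indep m F) m.

Lemma dep_spec (F : Fn) : exists m : 'I_n.+1, indep m F /\ dep F = m.
Proof.
have h : (0 < #|[pred m : 'I_n.+1 | indep m F]|)%N.
  by apply/card_gt0P; exists ord0; rewrite inE /= indep0.
have [m hm e] := eq_bigmax_cond (fun m : 'I_n.+1 => nat_of_ord m) h.
by exists m; split => //; rewrite /dep e.
Qed.

Lemma indep_dep (F : Fn) : indep (dep F) F.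
Proof. by have [m [h ->]] := dep_spec F. Qed.

Lemma dep_le (F : Fn) : (dep F <= n)%N.
Proof. by have [m [h ->]] := dep_spec F; rewrite -ltnS. Qed.

Lemma le_dep m (F : Fn) : (m <= n)%N -> indep m F -> (m <= dep F)%N.
Proof.
move=> hm hF; rewrite /dep.
exact: (@leq_bigmax_cond _ (fun m : 'I_n.+1 => indep m F) (fun m : 'I_n.+1 => nat_of_ord m) (Ordinal (m:=m) (hm : (m < n.+1)%N))).
Qed.

Lemma indep_iff m (F : Fn) : (m <= n)%N -> indep m F = (m <= dep F)%N.
Proof.
move=> hm; apply/idP/idP; first exact: le_dep.
by move=> h; apply: indep_mono h (indep_dep F).
Qed.

Definition scF (c : C) (F : Fn) : Fn := [ffun p => c * F p].

Lemma indep_scF m c (F : Fn) : indep m F -> indep m (scF c F).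
Proof.
move=> h; apply: indepI => p q H; rewrite !ffunE; congr (_ * _); exact: indepE H.
Qed.

Lemma rsk_scF i k c (F : Fn) : rsk i k (scF c F) = scF c (rsk i k F).
Proof. by apply/ffunP => p; rewrite !ffunE. Qed.

Lemma setb_id (i : 'I_n) (r : V) : setb i (r i) r = r.
Proof. by apply/ffunP => k; rewrite ffunE; case: eqP => [->|]. Qed.

Lemma rsk_pt i (F : Fn) (p : P) : rsk i (blk (p.1 i) (p.2 i)) F p = F p.
Proof. by rewrite ffunE blk_r blk_c !setb_id; case: p. Qed.

Lemma rsk_eq m (i : 'I_n) k (F : Fn) : indep m F -> (i < m)%N -> rsk i k F = F.
Proof.
move=> hF hi; apply/ffunP => p; rewrite ffunE; apply: (indepE hF) => k' hk' /=.
have hne : k' != i by apply/eqP => e; move: (leq_trans hi hk'); rewrite e ltnn.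
by rewrite !ffunE (negbTE hne).
Qed.

Lemma rsk_indep (i : 'I_n) k (F : Fn) : indep i F -> indep i.+1 (rsk i k F).
Proof.
move=> hF; apply: indepI => p q H; rewrite !ffunE; apply: (indepE hF) => k' hk' /=.
rewrite !ffunE; case: eqP => [//|hne]; apply: H.
by rewrite ltn_neqAle hk' andbT; apply/eqP => e; apply: hne; apply: val_inj.
Qed.

Definition ordl (d : nat) : 'I_n := insubd i0 (n - d.+1)%N.

Lemma ordlE d : (d < n)%N -> val (ordl d) = (n - d.+1)%N.
Proof. move=> hd; rewrite /ordl insubdK // -topredE /=; lia. Qed.

Definition lmax (s : 'I_4 -> C) : 'I_4 :=
  odflt ord0 [pick k | [forall k', `|s k'| <= `|s k|] &&
                       [forall k' : 'I_4, (k' < k)%N ==> (`|s k'| < `|s k|)]].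

Definition p0 : P := ([ffun => false], [ffun => false]).

Fixpoint scd (d : nat) (F : Fn) : C :=
  if d is d'.+1 then
    let s := fun k => scd d' (rsk (ordl d') k F) in s (lmax s)
  else F p0.

Definition sc F := scd n F.

Lemma ex_max (T : finType) (x0 : T) (f : T -> C) :
  exists k, forall k', `|f k'| <= `|f k|.
Proof.
suff: forall s : seq T, exists k, forall k', k' \in s -> `|f k'| <= `|f k|.
  by case/(_ (enum T)) => k H; exists k => k'; apply: H; rewrite mem_enum.
elim=> [|a s [k IH]]; first by exists x0.
have := real_leVge (normr_real (f a)) (normr_real (f k)).
case/orP => h.
  exists k => k'; rewrite inE => /orP [/eqP ->|] //; exact: IH.
exists a => k'; rewrite inE => /orP [/eqP ->|] //.
by move/IH => h'; apply: le_trans h' h.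
Qed.

Lemma lmax_spec s : (forall k, `|s k| <= `|s (lmax s)|) /\
  (forall k : 'I_4, (k < lmax s)%N -> `|s k| < `|s (lmax s)|).
Proof.
rewrite /lmax; case: pickP => [k /andP [/forallP H1 /forallP H2]|none] /=.
  by split => // k'; apply/implyP.
exfalso; have [km hkm] := ex_max ord0 s.
have exP : exists m, (m < 4)%N && (`|s (inord m)| == `|s km|).
  by exists km; rewrite ltn_ord inord_val eqxx.
case: (ex_minnP exP) => m /andP [hm4 /eqP hm] hmin.
have hkm' : nat_of_ord (inord m : 'I_4) = m by rewrite inordK.
have := none (inord m); rewrite hm; case/negP; apply/andP; split.
  by apply/forallP.
apply/forallP => k'; apply/implyP => hk'; rewrite lt_neqAle hkm andbT.
apply/negP => /eqP e; have := hmin k'; rewrite ltn_ord inord_val e eqxx /=.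
by move/(_ isT); rewrite -hkm' leqNgt hk'.
Qed.

Lemma scd_S d (F : Fn) : scd d.+1 F =
  (fun k => scd d (rsk (ordl d) k F)) (lmax (fun k => scd d (rsk (ordl d) k F))).
Proof. by []. Qed.

Lemma lmax_ext (s s' : 'I_4 -> C) : s =1 s' -> lmax s = lmax s'.
Proof.
move=> es; rewrite /lmax; congr odflt; apply: eq_pick => k /=.
congr (_ && _); apply: eq_forallb => k'; by rewrite !es.
Qed.

Lemma lmax_scale (s : 'I_4 -> C) c : c != 0 -> lmax (fun k => c * s k) = lmax s.
Proof.
move=> hc; have hc' : 0 < `|c| by rewrite normr_gt0.
rewrite /lmax; congr odflt; apply: eq_pick => k /=.
congr (_ && _); apply: eq_forallb => k'; by rewrite !normrM ?ler_pM2l ?ltr_pM2l.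
Qed.

Lemma scd_scale d c (F : Fn) : scd d (scF c F) = c * scd d F.
Proof.
elim: d F => [|d IH] F; first by rewrite /= ffunE.
rewrite !scd_S.
set s := (fun k => scd d (rsk (ordl d) k F)).
have es : forall k, scd d (rsk (ordl d) k (scF c F)) = c * s k.
  by move=> k; rewrite rsk_scF IH.
rewrite (lmax_ext es) es.
have [->|hc] := eqVneq c 0; first by rewrite !mul0r.
by rewrite lmax_scale.
Qed.

Lemma scd_max d (F : Fn) : indep (n - d) F -> forall p, `|F p| <= `|scd d F|.
Proof.
elim: d F => [|d IH] F hF p.
  rewrite /= (indepE hF (q := p0)) // => k; rewrite subn0 => hk.
  by move: (ltn_ord k); rewrite ltnNge hk.
rewrite scd_S; set i := ordl d; set s := (fun k : 'I_4 => scd d (rsk i k F)).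
have [h1 _] := lmax_spec s.
apply: le_trans (h1 (blk (p.1 i) (p.2 i))).
rewrite -{1}(rsk_pt i F p); apply: IH.
case: (ltnP d n) => hd.
  have ei : val i = (n - d.+1)%N by rewrite ordlE.
  have -> : (n - d = (val i).+1)%N by rewrite ei; lia.
  by apply: rsk_indep; rewrite ei.
have -> : (n - d = 0)%N by lia.
exact: indep0.
Qed.

Lemma scd_val d (F : Fn) : exists p, scd d F = F p.
Proof.
elim: d F => [|d IH] F /=; first by exists p0.
set k := lmax _.
have [p hp] := IH (rsk (ordl d) k F).
by exists (setb (ordl d) (2 <= k)%N p.1, setb (ordl d) (odd k) p.2); rewrite hp ffunE.
Qed.

Lemma sc_zero (F : Fn) : sc F = 0 -> F = 0.
Proof.
move=> h; apply/ffunP => p; rewrite ffunE; apply/eqP; rewrite -normr_le0.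
by rewrite -[X in _ <= X](normr0 C) -h; apply: scd_max; rewrite subnn indep0.
Qed.

Lemma sc0 : sc 0 = 0.
Proof. by rewrite /sc; have [p ->] := scd_val n 0; rewrite ffunE. Qed.

Lemma scd_down d (G : Fn) : (d < n)%N -> indep (n - d) G -> scd d.+1 G = scd d G.
Proof.
move=> hd hG; rewrite scd_S /=.
rewrite (rsk_eq _ hG) //; rewrite ordlE //; lia.
Qed.

Lemma scd_top m (G : Fn) : (m <= n)%N -> indep m G -> scd n G = scd (n - m) G.
Proof.
move=> hm hG.
suff: forall t, (t <= m)%N -> scd (n - m + t) G = scd (n - m) G.
  by move/(_ m (leqnn m)); rewrite subnK.
elim=> [|t IH] ht; first by rewrite addn0.
rewrite addnS scd_down; first by apply: IH; apply: ltnW.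
  lia.
apply: indep_mono hG; lia.
Qed.

Lemma sc_unfold (i : 'I_n) (F : Fn) : indep i F ->
  sc F = (fun k => sc (rsk i k F)) (lmax (fun k => sc (rsk i k F))).
Proof.
move=> hF; rewrite /sc (scd_top (ltnW (ltn_ord i)) hF).
have hi := ltn_ord i.
have -> : (n - i = (n - i.+1).+1)%N by lia.
have eo : ordl (n - i.+1) = i.
  apply: val_inj; rewrite ordlE /=; lia.
rewrite scd_S eo.
have es : forall k, scd (n - i.+1) (rsk i k F) = scd n (rsk i k F).
  move=> k; rewrite (scd_top (m := i.+1)) //; exact: rsk_indep.
by rewrite (@lmax_ext (fun k => scd (n - i.+1) (rsk i k F)) (fun k => scd n (rsk i k F)) es) es.
Qed.

Lemma node_normw (i : 'I_n) (F : Fn) : indep i F -> sc F = 1 ->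
  normw (fun k => sc (rsk i k F)).
Proof.
move=> hF h1; set s := (fun k : 'I_4 => sc (rsk i k F)).
have e : s (lmax s) = 1 by rewrite -h1 (sc_unfold hF).
have [m1 m2] := lmax_spec s.
rewrite e normr1 in m1 m2.
split.
- by exists (lmax s); rewrite e oner_neq0.
- by move=> k _; apply: m1.
- by exists (lmax s); rewrite e ?oner_neq0 ?normr1.
move=> k hk hl; case: (ltngtP k (lmax s)) => hc.
- by have := m2 k hc; rewrite hk ltxx.
- by have := hl _ hc; rewrite e normr1 eqxx.
- by have -> : k = lmax s by apply: val_inj.

Qed.

Variable M : Fn.

Local Notation Key := ('I_n.+1 * (V * V))%type.
Definition Rk (key : Key) : Fn :=
  [ffun p : P => M (mix key.1 key.2.1 p.1, mix key.1 key.2.2 p.2)].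
Definition nrm (F : Fn) : Fn := scF (sc F)^-1 F.
Definition Lc : seq Fn :=
  [seq F <- [seq nrm (Rk k) | k <- enum {: Key}] | (F != 0) && (dep F < n)%N].
Definition Node := seq_sub Lc.
Definition cind (v : Node) : 'I_n := insubd i0 (dep (ssval v)).
Definition cch (v : Node) k : Fn := rsk (cind v) k (ssval v).
Definition cwt (v : Node) k : C := sc (cch v k).
Definition cedge (G : Fn) : option Node := if sc G == 0 then None else insub (nrm G).
Definition csucc (v : Node) k := cedge (cch v k).
Definition canon : qmdd n C := @Qmdd n C Node cind csucc cwt (cedge M) (sc M).

Lemma memL F : F \in Lc -> [/\ F != 0, (dep F < n)%N & exists key, F = nrm (Rk key)].
Proof. rewrite mem_filter => /andP [/andP [h1 h2] /mapP [k _ ek]]; split => //; by exists k. Qed.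

Lemma inL F (key : Key) : F = nrm (Rk key) -> F != 0 -> (dep F < n)%N -> F \in Lc.
Proof. by move=> -> h1 h2; rewrite mem_filter h1 h2 /=; apply: map_f; rewrite mem_enum. Qed.

Lemma sc_nz (G : Fn) : G != 0 -> sc G != 0.
Proof. by move=> hG; apply/eqP => /sc_zero; apply/eqP. Qed.

Lemma scF_eq0 c (G : Fn) : c != 0 -> (scF c G == 0) = (G == 0).
Proof.
move=> hc; apply/eqP/eqP => [h|->]; apply/ffunP => p.
  by have := congr1 (fun F : Fn => F p) h; rewrite !ffunE => /eqP; rewrite mulf_eq0 (negbTE hc) => /eqP.
by rewrite !ffunE mulr0.
Qed.

Lemma nrm_scale c (G : Fn) : c != 0 -> nrm (scF c G) = nrm G.
Proof.
move=> hc; apply/ffunP => p; rewrite /nrm !ffunE /sc scd_scale -/(sc G).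
by rewrite invfM mulrACA mulVf // mul1r.
Qed.

Lemma sc_nrm (G : Fn) : G != 0 -> sc (nrm G) = 1.
Proof. by move=> hG; rewrite /nrm /sc scd_scale -/(sc G) mulVf // sc_nz. Qed.

Lemma nrm_nz (G : Fn) : G != 0 -> nrm G != 0.
Proof. by move=> hG; rewrite /nrm scF_eq0 // invr_eq0 sc_nz. Qed.

Lemma nrm_mul (G : Fn) p : sc G * nrm G p = G p.
Proof.
have [->|hG] := eqVneq G 0; first by rewrite sc0 mul0r ffunE.
by rewrite ffunE mulrA mulfV ?mul1r // sc_nz.
Qed.

Lemma Rk_indep (key : Key) : indep key.1 (Rk key).
Proof.
apply: indepI => p q H; rewrite !ffunE; congr (M (_, _)); apply/ffunP => k; rewrite !ffunE;
  case: ltnP => // hk; by have [] := H k hk.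
Qed.

Lemma node_facts (v : Node) : [/\ ssval v != 0, val (cind v) = dep (ssval v),
  sc (ssval v) = 1, indep (cind v) (ssval v) & exists key, ssval v = nrm (Rk key)].
Proof.
have [h1 h2 [key hk]] := memL (ssvalP v).
have ei : val (cind v) = dep (ssval v) by rewrite /cind insubdK.
split => //; last by exists key.
- by rewrite hk sc_nrm //; apply: contraNneq h1 => e; rewrite hk e /nrm; apply/eqP/ffunP => p; rewrite !ffunE mulr0.
- by rewrite ei indep_dep.
Qed.

Lemma mix_mix j i (r0 r0' x : V) : (j <= i)%N -> (forall k : 'I_n, (k < j)%N -> r0' k = r0 k) ->
  mix j r0 (mix i r0' x) = mix i r0' x.
Proof.
move=> hji h; apply/ffunP => k; rewrite !ffunE; case: ltnP => hk //.
by rewrite (leq_trans hk hji) h.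
Qed.

Lemma closure (v : Node) k : exists key, nrm (cch v k) = nrm (Rk key).
Proof.
have [h1 h2 h3 h4 [key hk]] := node_facts v.
set i := cind v in h2 h4 *.
set R := Rk key in hk.
have hR : R != 0.
  by apply: contraNneq h1 => e; rewrite hk e /nrm; apply/eqP/ffunP => p; rewrite !ffunE mulr0.
have hc : (sc R)^-1 != 0 by rewrite invr_eq0 sc_nz.
have eR : R = scF (sc R) (ssval v).
  by apply/ffunP => p; rewrite hk [RHS]ffunE nrm_mul.
have hRi : indep i R by rewrite eR; apply: indep_scF.
have hj : (key.1 <= i)%N.
  rewrite h2; apply: le_dep; first by rewrite -ltnS.
  by rewrite hk; apply: indep_scF; apply: Rk_indep.
exists (lift ord0 i, (setb i (2 <= k)%N key.2.1, setb i (odd k) key.2.2)).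
rewrite /cch -/i hk /nrm rsk_scF -/(nrm _) nrm_scale //.
congr nrm; apply/ffunP => p; rewrite /rsk ffunE.
rewrite (indepE hRi (q := (mix (lift ord0 i) (setb i (2 <= k)%N key.2.1) p.1,
                           mix (lift ord0 i) (setb i (odd k) key.2.2) p.2))); last first.
  move=> k' hk' /=; rewrite !ffunE /bump leq0n add1n; case: eqP => [->|hne]; first by rewrite ltnSn.
  have : (i < k')%N by rewrite ltn_neqAle hk' andbT; apply/eqP => e; apply: hne; apply: val_inj.
  by rewrite ltnNge ltnS => /negbTE ->.
rewrite /R /Rk !ffunE /= !mix_mix //;
  try (by rewrite /bump leq0n add1n; apply: (leq_trans hj));
  move=> k' hk'; rewrite ffunE; case: eqP => // e;
  by move: (leq_trans hk' hj); rewrite e ltnn.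
Qed.
Lemma child_gt (v : Node) k (u : Node) : ssval u = nrm (cch v k) ->
  (val (cind v) < val (cind u))%N.
Proof.
move=> e; have [_ h2 _ h4 _] := node_facts v; have [_ hu2 _ _ _] := node_facts u.
rewrite hu2 e; apply: le_dep; first exact: ltn_ord.
by apply: indep_scF; apply: rsk_indep.
Qed.

Lemma canon_wf1 : wf1 canon.
Proof.
move=> v k /=; rewrite /csucc /cedge; case: eqP => _; first exact: ltn_ord.
by case: insubP => [u _ eu|_] /=; [exact: child_gt eu | exact: ltn_ord].
Qed.

Lemma edge_ok (G : Fn) (hG : exists key, nrm G = nrm (Rk key))
  (IH : forall u : Node, ssval u = nrm G ->
     forall r c : V, qv (Q := canon) (Some u) r c = ssval u (r, c)) :
  forall r c : V, sc G * qv (Q := canon) (cedge G) r c = G (r, c).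
Proof.
move=> r c; rewrite /cedge; case: eqP => hs.
  by rewrite hs mul0r (sc_zero hs) ffunE.
case: insubP => [u _ eu|hnot].
  by rewrite IH // eu nrm_mul.
have hG0 : G != 0 by apply: contra_not_neq hs => ->; rewrite sc0.
have [key hk] := hG.
have hdep : ~~ (dep (nrm G) < n)%N.
  by apply: contra hnot => hd; apply: (inL hk) => //; exact: nrm_nz.
have hdn : dep (nrm G) = n by apply/eqP; rewrite eqn_leq dep_le leqNgt hdep.
have hI : indep n (nrm G) by rewrite -{1}hdn indep_dep.
have [p hp] := scd_val n (nrm G).
have h1 : nrm G (r, c) = 1.
  rewrite -(sc_nrm hG0) /sc hp; apply: (indepE hI) => k hk'.
  by move: (ltn_ord k); rewrite ltnNge hk'.
by rewrite /qv /= -h1 nrm_mul.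
Qed.

Lemma canon_sem (v : Node) (r c : V) : qv (Q := canon) (Some v) r c = ssval v (r, c).
Proof.
suff: forall d (v : Node), (n - val (cind v) < d)%N ->
  forall r c : V, qv (Q := canon) (Some v) r c = ssval v (r, c).
  by apply; apply: ltnSn.
elim=> [//|d IH] {}v hd {}r {}c.
rewrite (qv_Some canon_wf1) /=.
rewrite /cwt /csucc edge_ok.
- by rewrite /cch; exact: (rsk_pt (cind v) (ssval v) (r, c)).
- exact: closure.
move=> u eu; apply: IH; exact: (nat_help hd (ltn_ord _) (ltnW (ltn_ord _)) (child_gt eu)).
Qed.

Lemma Rk0 : Rk (ord0, p0) = M.
Proof.
apply/ffunP => p; rewrite ffunE; case: p => r c /=.
have e : forall x0 x : V, mix 0 x0 x = x by move=> x0 x; apply/ffunP => k; rewrite ffunE.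
by rewrite !e.
Qed.

Lemma root_ok (r c : V) : sc M * qv (Q := canon) (cedge M) r c = M (r, c).
Proof.
apply: edge_ok; first by exists (ord0, p0); rewrite Rk0.
by move=> u _; apply: canon_sem.
Qed.

Lemma canon_good : good canon.
Proof.
split.
- exact: canon_wf1.
- move=> v k /= h; rewrite /csucc /cedge; move: h; rewrite /cwt => ->.
  by rewrite eqxx.
- split.
  + move=> u v /= hi H; apply: val_inj; apply/ffunP => [[r c]].
    rewrite -!canon_sem !(qv_Some canon_wf1) /= hi.
    by move: (H (blk (r (cind v)) (c (cind v)))) => /= [-> ->].
  + move=> v /= H.
    have [h1 h2 h3 h4 _] := node_facts v.
    suff: indep (cind v).+1 (ssval v).
      by move/(le_dep (ltn_ord _)); rewrite -h2 ltnn.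
    apply: indepI => [[r c] [r' c']] /= hpq.
    rewrite -!canon_sem !(qv_Some canon_wf1) /=.
    move: (H (blk (r (cind v)) (c (cind v)))) => /= [-> ->].
    move: (H (blk (r' (cind v)) (c' (cind v)))) => /= [-> ->].
    congr (_ * _); apply: (qv_ext canon_wf1) => k hk; apply: hpq.
    exact: leq_trans (canon_wf1 v 0) hk.
- move=> v /=.
  have [h1 h2 h3 h4 _] := node_facts v.
  have [a b c d] := node_normw h4 h3.
  by split.
Qed.

Lemma canon_reach (v : Node) :
  exists2 rt, cedge M = Some rt & connect (@qedge _ _ canon) rt v.
Proof.
have [h1 h2 h3 h4 [key hk]] := node_facts v.
set i := cind v in h2 h4 *.
set R := Rk key in hk.
have hR : R != 0.
  by apply: contraNneq h1 => e; rewrite hk e /nrm; apply/eqP/ffunP => p; rewrite !ffunE mulr0.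
have eR : R = scF (sc R) (ssval v).
  by apply/ffunP => p; rewrite hk [RHS]ffunE nrm_mul.
have hRi : indep i R by rewrite eR; apply: indep_scF.
have hj : (key.1 <= i)%N.
  rewrite h2; apply: le_dep; first by rewrite -ltnS.
  by rewrite hk; apply: indep_scF; apply: Rk_indep.
have [o' [w [hjo hr H2]]] := restr canon_wf1 (cedge M) key.2.1 key.2.2 (ltnW (ltn_ord i)).
have Eq : forall r c : V, 1 * qv (Q := canon) (Some v) r c =
           ((sc R)^-1 * sc M * w) * qv (Q := canon) o' r c.
  move=> r c; rewrite mul1r canon_sem hk ffunE -!mulrA; congr (_ * _).
  rewrite (indepE hRi (q := (mix i key.2.1 r, mix i key.2.2 c))); last first.
    by move=> k hk' /=; rewrite !ffunE ltnNge hk'.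
  rewrite /R /Rk ffunE /= !mix_mix // -/(mix i key.2.1 r) -/(mix i key.2.2 c).
  by rewrite -root_ok H2.
have [e1 _] := qv_scal canon_good canon_good (oner_neq0 _) Eq.
have E' : forall r c : V, qv (Q := canon) (Some v) r c = qv (Q := canon) o' r c.
  by move=> r c; rewrite -[LHS]mul1r Eq -e1 mul1r.
have ev := qv_inj canon_good E'.
case: hr => [e|[u [u' [hu hu' hc]]]]; first by rewrite e in ev.
by exists u => //; move: ev; rewrite hu' => -[->].
Qed.

Lemma canon_spec : [/\ qmdd_wf canon, qreduced canon, qnormalized canon &
  forall r c : V, qrootw canon * qv (qroot canon) r c = M (r, c)].
Proof.
have [g1 g3 gR gN] := canon_good.
split => //; last exact: root_ok.
split => //.
- exact: canon_reach.
- by move=> /= h; rewrite /cedge h eqxx.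
Qed.

End Scal.
Section Bits.
Variable n : nat.

Lemma qval_eqfun (C : nzRingType) (Q : qmdd n C) f (o : option (qnode Q)) r r' c c' :
  r =1 r' -> c =1 c' -> qval f o r c = qval f o r' c'.
Proof.
move=> hr hc; elim: f o => [|f IH] [v|] //=.
by rewrite hr hc IH.
Qed.

Section B.
Variable b : 'I_n -> bool.
Definition Tb (t : nat) : nat := (\sum_(k < n | (t <= k)%N) b k * 2 ^ (n - k.+1))%N.

Lemma Tb_split t (ht : (t < n)%N) :
  Tb t = (b (Ordinal ht) * 2 ^ (n - t.+1) + Tb t.+1)%N.
Proof.
rewrite /Tb (bigD1 (Ordinal ht)) //=; congr (_ + _)%N.
apply: eq_bigl => k; by rewrite ltn_neqAle -val_eqE /= eq_sym andbC.
Qed.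

Lemma Tb_lt s : (s <= n)%N -> (Tb (n - s) < 2 ^ s)%N.
Proof.
elim: s => [|s IH] hs.
  rewrite subn0 /Tb big_pred0 // => k; rewrite leqNgt ltn_ord.
  by [].
have ht : (n - s.+1 < n)%N by lia.
rewrite (Tb_split ht).
have -> : (n - (n - s.+1).+1 = s)%N by lia.
have -> : (n - s.+1).+1 = (n - s)%N by lia.
rewrite expnS mul2n -addnn -addnS; apply: leq_add; last by apply: IH; apply: ltnW.
by case: (b _); rewrite ?mul1n ?mul0n.
Qed.

Lemma sum_lt : (\sum_(k < n) b k * 2 ^ (n - k.+1) < 2 ^ n)%N.
Proof.
have := Tb_lt (leqnn n); rewrite subnn /Tb.
by rewrite (eq_bigl (fun _ => true)).
Qed.

Lemma bits_idx_of (k : 'I_n) : bits_of (idx_of_bits b) k = b k.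
Proof.
rewrite /bits_of /idx_of_bits insubdK; last by rewrite -topredE /= sum_lt.
rewrite (bigID (fun k' : 'I_n => (k' < k)%N)) /=.
have eT : (\sum_(i < n | true && ~~ (i < k)%N) b i * 2 ^ (n - i.+1))%N = Tb k.
  by apply: eq_bigl => i; rewrite -leqNgt.
rewrite eT (Tb_split (ltn_ord k)).
set H := (\sum_(i < n | true && (i < k)%N) b i * 2 ^ (n - i.+1))%N.
set e := (n - k.+1)%N.
have hd : (2 ^ e.+1 %| H)%N.
  apply: dvdn_sum => i /= hi; apply: dvdn_mull; apply: dvdn_exp2l.
  rewrite /e; have := ltn_ord k; lia.
have -> : H = (H %/ 2 ^ e.+1 * 2 ^ e.+1)%N by rewrite divnK.
have hT : (Tb k.+1 < 2 ^ e)%N.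
  have -> : k.+1 = (n - e)%N by rewrite /e; have := ltn_ord k; lia.
  apply: Tb_lt; rewrite /e; lia.
have -> : Ordinal (ltn_ord k) = k by apply: val_inj.
rewrite expnS mulnA addnA -mulnDl divnMDl ?expn_gt0 // (divn_small hT) addn0.
by rewrite oddD oddM /= andbF; case: (b k).
Qed.

End B.

Lemma idx_ext (b b' : 'I_n -> bool) : b =1 b' -> idx_of_bits b = idx_of_bits b'.
Proof. by move=> h; rewrite /idx_of_bits; congr insubd; apply: eq_bigr => k _; rewrite h. Qed.

Lemma bits_idx (i : 'I_(2 ^ n)) : idx_of_bits (bits_of i) = i.
Proof.
pose f := fun b : {ffun 'I_n -> bool} => idx_of_bits b.
have finj : injective f.
  move=> b b' e; apply/ffunP => k.
  by rewrite -(bits_idx_of b k) -(bits_idx_of b' k) /f in e *; rewrite e.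
have := inj_card_onto finj; rewrite card_ffun !card_ord card_bool => /(_ (leqnn _) i).
case/codomP => b ->; apply: idx_ext => k; rewrite /f bits_idx_of.
by [].
Qed.

End Bits.
Section Xor.
Local Open Scope nat_scope.
Lemma card_sum (T : finType) (A : {set T}) (v : T -> bool) :
  #|[set k in A | v k]| = (\sum_(k in A) v k)%N.
Proof.
rewrite -sum1_card big_mkcond [RHS]big_mkcond; apply: eq_bigr => k _; rewrite !inE.
by case: (k \in A); case: (v k).
Qed.

Lemma odd_sum_eq (I : finType) (P : pred I) (f g : I -> nat) :
  (forall i, P i -> odd (f i) = odd (g i)) ->
  odd (\sum_(i | P i) f i) = odd (\sum_(i | P i) g i).
Proof.
move=> h; apply: (big_ind2 (fun a b => odd a = odd b)) => //.
by move=> x1 x2 y1 y2 h1 h2; rewrite !oddD h1 h2.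
Qed.

Lemma lt_vec_inj n (pi : 'I_n -> {set 'I_n}) : lin_trans pi ->
  forall v w : 'I_n -> bool, lt_vec pi v =1 lt_vec pi w -> v =1 w.
Proof.
move=> [_ hS] v w h j; have [S hSj] := hS j.
suff key : forall x : 'I_n -> bool, x j = odd (\sum_(i in S) \sum_(k in pi i) (x k : nat)).
  rewrite !key; apply: odd_sum_eq => i _; have := h i.
  by rewrite /lt_vec /lc_eval !card_sum.
move=> x.
have e1 : (\sum_(i in S) \sum_(k in pi i) (x k : nat) =
           \sum_k #|[set i in S | k \in pi i]| * x k)%N.
  transitivity (\sum_(i in S) \sum_k ((k \in pi i) * x k))%N.
    apply: eq_bigr => i _; rewrite big_mkcond; apply: eq_bigr => k _.
    by case: (k \in pi i); rewrite ?mul1n ?mul0n.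
  rewrite exchange_big; apply: eq_bigr => k _; rewrite card_sum big_distrl /=.
  by [].
rewrite e1.
have e2 : odd (\sum_k #|[set i in S | k \in pi i]| * x k)%N =
          odd (\sum_k (k == j) * x k)%N.
  by apply: odd_sum_eq => k _; rewrite !oddM -hSj; case: (k == j).
rewrite e2 (bigD1 j) //= eqxx mul1n big1 ?addn0 ?oddb // => k /negbTE ->.
by rewrite mul0n.
Qed.

Lemma lt_perm_bij n (pi : 'I_n -> {set 'I_n}) : lin_trans pi -> bijective (lt_perm pi).
Proof.
move=> hpi; apply: injF_bij => i i' e.
have h : lt_vec pi (bits_of i) =1 lt_vec pi (bits_of i').
  move=> k; have := congr1 (fun x => bits_of x k) e.
  by rewrite /lt_perm !bits_idx_of.
have h' := lt_vec_inj hpi h.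
by rewrite -(bits_idx i) -(bits_idx i'); apply: idx_ext.
Qed.

End Xor.
Unset Implicit Arguments. Set Strict Implicit. Set Printing Implicit Defensive.

Theorem theorem3p7 (R : realType) (n : nat) (hn : (1 <= n)%N)
  (pi : 'I_n -> {set 'I_n}) (hpi : lin_trans pi)
  (U : 'M[R[i]]_(2 ^ n)) (hU : unitary_mx U) :
  (exists Q : qmdd n R[i],
     [/\ qmdd_wf Q, qreduced Q, qnormalized Q & ltsem Q pi = U]) /\
  (forall Q1 Q2 : qmdd n R[i],
     qmdd_wf Q1 -> qreduced Q1 -> qnormalized Q1 -> ltsem Q1 pi = U ->
     qmdd_wf Q2 -> qreduced Q2 -> qnormalized Q2 -> ltsem Q2 pi = U ->
     qiso Q1 Q2).
Proof.
case: n hn pi hpi U hU => [//|n'] _ pi hpi U _.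
have [g hg1 hg2] := lt_perm_bij hpi.
have ltinj : forall A B : 'M[R[i]]_(2 ^ n'.+1), lt_mx pi A = lt_mx pi B -> A = B.
  move=> A B e; apply/matrixP => i j.
  have := congr1 (fun X : 'M[R[i]]_(2 ^ n'.+1) => X (g i) (g j)) e.
  by rewrite !mxE !hg2.
have qsemE : forall (Q : qmdd n'.+1 R[i]) (r c : {ffun 'I_n'.+1 -> bool}),
    qsem Q (idx_of_bits r) (idx_of_bits c) = qrootw Q * qv (qroot Q) r c.
  move=> Q r c; rewrite mxE; congr (_ * _); apply: qval_eqfun => k;
    exact: bits_idx_of.
split.
- set U' := \matrix_(i, j) U (g i) (g j).
  set M : {ffun ({ffun 'I_n'.+1 -> bool} * {ffun 'I_n'.+1 -> bool}) -> R[i]} :=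
    [ffun p : ({ffun 'I_n'.+1 -> bool} * {ffun 'I_n'.+1 -> bool}) =>
       U' (idx_of_bits (fun k => p.1 k)) (idx_of_bits (fun k => p.2 k))].
  have [w r nn H] := canon_spec ord0 M.
  exists (canon ord0 M); split => //; rewrite /ltsem.
  have -> : qsem (canon ord0 M) = U'.
    apply/matrixP => i j.
    have ei : idx_of_bits (bits_of i) = idx_of_bits [ffun k => bits_of i k].
      by apply: idx_ext => k; rewrite ffunE.
    have ej : idx_of_bits (bits_of j) = idx_of_bits [ffun k => bits_of j k].
      by apply: idx_ext => k; rewrite ffunE.
    rewrite -(bits_idx i) -(bits_idx j) ei ej qsemE H ffunE.
    by [].
  by apply/matrixP => i j; rewrite !mxE !hg1.
- move=> Q1 Q2 w1 r1 n1 e1 w2 r2 n2 e2; apply: iso_of => // r c.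
  have e : qsem Q1 = qsem Q2 by apply: ltinj; rewrite /ltsem in e1 e2; rewrite e1 e2.
  by rewrite -!qsemE e.
Qed.
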